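(* Let $G$ be a finite, simple, connected $(q+1)$-regular graph with $n$ vertices and $m$ edges, let $a\in[0,1]$ and $b\in\mathbb R$, and let $\tilde{\mathbf U}$ be the generalized Grover matrix of $G$ with parameters $a,b$. Then \begin{align*} \det(\lambda\mathbf I_{2m}-\tilde{\mathbf U})&=(\lambda^2-b^2)^{m-n}\det\Big(\{\lambda^2+b((1-q)a+bq)\}\mathbf I_n-\lambda((1-q)a+b(q+1))\mathbf P(G)\Big)\\ &=(\lambda^2-b^2)^{m-n}\det\Big(\{\lambda^2-\lambda((1-q)a+b(q+1))+b((1-q)a+bq)\}\mathbf I_n+\lambda\Big(b-\frac{q-1}{q+1}a\Big)\Delta\Big), \end{align*} where $\Delta=\mathbf D-\mathbf A(G)$ is the Laplacian of $G$.
   Context: $D(G)$ is the set of $2m$ arcs of $G$ (for each edge $uv$, both $(u,v)$ and $(v,u)$); for $e=(u,v)$, $o(e)=u$, $t(e)=v$, $e^{-1}=(v,u)$, and $d_v=\deg v$. The generalized Grover matrix $\tilde{\mathbf U}=(\tilde U_{ef})_{e,f\in D(G)}$ has $\tilde U_{ef}=(2/d_{t(f)}-1)a+b$ if $t(f)=o(e)$ and $f\ne e^{-1}$; $\tilde U_{ef}=(2/d_{t(f)}-1)a$ if $f=e^{-1}$; $0$ otherwise. $\mathbf P(G)$ has entries $P_{uv}=1/\deg u$ if $u,v$ adjacent and $0$ otherwise; $\mathbf D$ is the diagonal degree matrix and $\mathbf A(G)$ the adjacency matrix. *)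

(* Defs.v *)
From HB Require Import structures.
From mathcomp Require Import all_boot all_order all_algebra.
From mathcomp Require Import all_classical all_reals.
Set Implicit Arguments. Unset Strict Implicit. Unset Printing Implicit Defensive.
Import Order.TTheory GRing.Theory Num.Theory.
Local Open Scope ring_scope.

Definition simple_graph (n : nat) (adj : rel 'I_n) : Prop :=
  symmetric adj /\ irreflexive adj.

Definition connected_graph (n : nat) (adj : rel 'I_n) : Prop :=
  forall u v : 'I_n, connect adj u v.

Definition deg (n : nat) (adj : rel 'I_n) (v : 'I_n) : nat :=
  #|[set w | adj v w]|.

Definition regular (n : nat) (adj : rel 'I_n) (k : nat) : Prop :=
  forall v : 'I_n, deg adj v = k.

(* D(G): the set of arcs (u,v), both orientations of each edge; #|arcs| = 2m *)
Definition arcs (n : nat) (adj : rel 'I_n) : {set 'I_n * 'I_n} :=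
  [set x : 'I_n * 'I_n | adj x.1 x.2].

Definition nedges (n : nat) (adj : rel 'I_n) : nat :=
  #|[set x : 'I_n * 'I_n | adj x.1 x.2 & (x.1 < x.2)%N]|.

Definition arc_of (n : nat) (adj : rel 'I_n) (i : 'I_#|arcs adj|) : 'I_n * 'I_n :=
  enum_val i.

Definition grover (R : realType) (n : nat) (adj : rel 'I_n) (a b : R)
  : 'M[R]_#|arcs adj| :=
  \matrix_(i, j)
    let e := arc_of i in let f := arc_of j in
    let c := (2 / (deg adj f.2)%:R - 1) * a in
    if f == (e.2, e.1) then c
    else if f.2 == e.1 then c + b
    else 0.

Definition transP (R : realType) (n : nat) (adj : rel 'I_n) : 'M[R]_n :=
  \matrix_(u, v) if adj u v then ((deg adj u)%:R)^-1 else 0.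

Definition degmx (R : realType) (n : nat) (adj : rel 'I_n) : 'M[R]_n :=
  \matrix_(u, v) if u == v then (deg adj u)%:R else 0.

Definition adjmx (R : realType) (n : nat) (adj : rel 'I_n) : 'M[R]_n :=
  \matrix_(u, v) if adj u v then 1 else 0.

Definition laplacian (R : realType) (n : nat) (adj : rel 'I_n) : 'M[R]_n :=
  degmx R adj - adjmx R adj.

(* Main.v *)
Require Import Defs.
From HB Require Import structures.
From mathcomp Require Import all_boot all_order all_algebra.
From mathcomp Require Import all_classical all_reals.
From mathcomp Require Import ring zify.
Set Implicit Arguments. Unset Strict Implicit. Unset Printing Implicit Defensive.
Import Order.TTheory GRing.Theory Num.Theory.
Local Open Scope ring_scope.

Lemma sylv (S : comNzRingType) p r (x : S) (X : 'M[S]_(p,r)) (Y : 'M[S]_(r,p)) :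
  x ^+ r * \det (x%:M + X *m Y) = x ^+ p * \det (x%:M + Y *m X).
Proof.
pose M := block_mx x%:M (-X) Y 1%:M.
have E1 : M = block_mx (x%:M + X *m Y) (-X) 0 1%:M *m block_mx 1%:M 0 Y 1%:M.
  rewrite mulmx_block ?mulmx1 ?mul1mx ?mulmx0 ?mul0mx ?addr0 ?add0r.
  by rewrite mulNmx addrK.
have E2 : block_mx 1%:M 0 (-Y) x%:M *m M = block_mx x%:M (-X) 0 (x%:M + Y *m X).
  rewrite mulmx_block ?mulmx1 ?mul1mx ?mul0mx ?addr0 mul_scalar_mx mul_mx_scalar.
  by rewrite mulNmx mulmxN opprK scalerN addNr addrC.
have := congr1 determinant E2.
rewrite det_mulmx det_lblock det_ublock det1 mul1r det_scalar E1 det_mulmx.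
rewrite det_ublock det_lblock !det1 !mulr1 => ->.
by rewrite det_scalar.
Qed.


Lemma scalar_mxD (S : pzRingType) k (a c : S) : (a + c)%:M = a%:M + c%:M :> 'M_k.
Proof. exact: raddfD. Qed.
Lemma scalar_mxN (S : pzRingType) k (a : S) : (- a)%:M = - a%:M :> 'M_k.
Proof. exact: raddfN. Qed.

Lemma detM (S : idomainType) p (N : 'M[S]_(p + p, p)) (J : 'M_(p + p)) (lam c : S) :
  N *m N^T = 1%:M + J -> N^T *m N = 2%:M -> lam - c != 0 ->
  \det (lam%:M + c *: J) = ((lam - c) * (lam + c)) ^+ p.
Proof.
move=> NN1 NN2 nz.
have E : lam%:M + c *: J = (lam - c)%:M + (c *: N) *m N^T.
  rewrite -scalemxAl NN1 scalerDr -[lam in LHS](subrK c) scalar_mxD -addrA.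
  by congr (_ + _); rewrite scale_scalar_mx mulr1.
have := sylv (lam - c) (c *: N) N^T.
rewrite -E -scalemxAr NN2 scale_scalar_mx -scalar_mxD det_scalar.
have -> : lam - c + c * 2 = lam + c by ring.
rewrite exprD -mulrA exprMn => /mulfI -> //.
by rewrite expf_neq0.
Qed.

Lemma core (S : idomainType) k p n (Hk : k = (p + p)%N) (N : 'M[S]_(k, p)) (J : 'M_k)
  (L K : 'M_(k, n)) (A : 'M_n) (lam b beta d : S) :
  N *m N^T = 1%:M + J -> N^T *m N = 2%:M -> J *m J = 1%:M -> J *m L = K ->
  K^T *m K = d%:M -> K^T *m L = A -> lam - b != 0 -> lam + b != 0 ->
  (lam ^+ 2 - b ^+ 2) ^+ n * \det (lam%:M - (beta *: (L *m K^T) - b *: J)) =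
  (lam ^+ 2 - b ^+ 2) ^+ p *
    \det ((lam ^+ 2 - b ^+ 2 + beta * b * d)%:M - (lam * beta) *: A).
Proof.
subst k.
move=> NN1 NN2 JJ JL KK KL nzm nzp.
set s := lam ^+ 2 - b ^+ 2.
have sE : s = (lam - b) * (lam + b) by rewrite /s; ring.
have snz : s != 0 by rewrite sE mulf_neq0.
have dP : \det (lam%:M + b *: J) = s ^+ p by rewrite sE (detM NN1 NN2).
have dM : \det (lam%:M + (- b) *: J) = s ^+ p.
  by rewrite (detM NN1 NN2) ?opprK // sE mulrC.
have HM : (lam%:M + (- b) *: J) *m (lam%:M - (beta *: (L *m K^T) - b *: J))
   = s%:M + (- (beta *: ((lam%:M + (- b) *: J) *m L))) *m K^T.
  do 4! rewrite ?mulmxDl ?mulmxDr ?mulmxBl ?mulmxBr ?mul_scalar_mx ?mul_mx_scalar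
     ?mulmxN ?mulNmx -?scalemxAl -?scalemxAr -?mulmxA ?JJ ?JL.
  rewrite mulmxA JL.
  apply/matrixP => i j; rewrite !mxE /s.
  by case: (i == j); rewrite ?mulr1n ?mulr0n; ring.
have := sylv s (- (beta *: ((lam%:M + (- b) *: J) *m L))) K^T.
rewrite -HM det_mulmx dM.
have -> : s%:M + K^T *m - (beta *: ((lam%:M + - b *: J) *m L))
   = (s + beta * b * d)%:M - (lam * beta) *: A.
  rewrite mulmxDl mul_scalar_mx -scalemxAl JL mulmxN -scalemxAr mulmxDr.
  rewrite -!scalemxAr KK KL.
  apply/matrixP => i j; rewrite !mxE.
  by case: (i == j); rewrite ?mulr1n ?mulr0n; ring.
by rewrite exprD mulrCA -mulrA => /(mulfI (expf_neq0 p snz)).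
Qed.

Lemma sum_eq1 (R : pzRingType) (T : finType) (A : {set T}) (z : T) (F : T -> R) :
  z \in A -> \sum_(x in A) (x == z)%:R * F x = F z.
Proof.
move=> zA; rewrite (bigD1 z) //= eqxx mul1r big1 ?addr0 // => x /andP[_ /negbTE ->].
by rewrite mul0r.
Qed.

Lemma sum_arcs (R : pzRingType) n (adj : rel 'I_n) (F : 'I_n * 'I_n -> R) :
  \sum_(i < #|arcs adj|) F (arc_of i) = \sum_(x in arcs adj) F x.
Proof. by rewrite [RHS]big_enum_val. Qed.

Definition sw n (x : 'I_n * 'I_n) := (x.2, x.1).
Definition eps n (x : 'I_n * 'I_n) := if (x.1 < x.2)%N then x else sw x.
Definition Eset n (adj : rel 'I_n) := [set x : 'I_n * 'I_n | adj x.1 x.2 & (x.1 < x.2)%N].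
Definition ed n (adj : rel 'I_n) (j : 'I_#|Eset adj|) : 'I_n * 'I_n := enum_val j.

Lemma sum_E (R : pzRingType) n (adj : rel 'I_n) (F : 'I_n * 'I_n -> R) :
  \sum_(j < #|Eset adj|) F (ed j) = \sum_(x in Eset adj) F x.
Proof. by rewrite [RHS]big_enum_val. Qed.

Lemma eps_eq n (x y : 'I_n * 'I_n) : x.1 != x.2 -> y.1 != y.2 ->
  (eps x == eps y) = (x == y) || (y == sw x).
Proof.
case: x y => [x1 x2] [y1 y2] /=; rewrite /eps /sw /= => h1 h2.
rewrite !xpair_eqE -!val_eqE /=; move: h1 h2; rewrite -!val_eqE /=.
case: x1 x2 y1 y2 => [x1 ?] [x2 ?] [y1 ?] [y2 ?] /= h1 h2.
case: ifP => h3; case: ifP => h4 /=; rewrite ?xpair_eqE -?val_eqE /=;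
 apply/idP/idP; lia.
Qed.

Definition Nm (R : pzRingType) n (adj : rel 'I_n) : 'M[R]_(#|arcs adj|, #|Eset adj|) :=
  \matrix_(i, j) (eps (arc_of i) == ed j)%:R.
Definition Jm (R : pzRingType) n (adj : rel 'I_n) : 'M[R]_#|arcs adj| :=
  \matrix_(i, j) (arc_of j == sw (arc_of i))%:R.
Definition Lm (R : pzRingType) n (adj : rel 'I_n) : 'M[R]_(#|arcs adj|, n) :=
  \matrix_(i, v) ((arc_of i).1 == v)%:R.
Definition Km (R : pzRingType) n (adj : rel 'I_n) : 'M[R]_(#|arcs adj|, n) :=
  \matrix_(i, v) ((arc_of i).2 == v)%:R.


Lemma arcP n (adj : rel 'I_n) x : (x \in arcs adj) = adj x.1 x.2.
Proof. by rewrite inE. Qed.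
Lemma arc_ofP n (adj : rel 'I_n) (i : 'I_#|arcs adj|) : arc_of i \in arcs adj.
Proof. exact: enum_valP. Qed.
Lemma sw_arc n (adj : rel 'I_n) (sym : symmetric adj) x : x \in arcs adj -> sw x \in arcs adj.
Proof. by rewrite !arcP /= sym. Qed.
Lemma arc_neq n (adj : rel 'I_n) (irr : irreflexive adj) x : x \in arcs adj -> x.1 != x.2.
Proof. by rewrite arcP; apply: contraTN => /eqP ->; rewrite irr. Qed.
Lemma eps_E n (adj : rel 'I_n) (sym : symmetric adj) (irr : irreflexive adj) x : x \in arcs adj -> eps x \in Eset adj.
Proof.
move=> xa; have := arc_neq irr xa; move: xa; rewrite arcP /eps /Eset inE.
case: x => [x1 x2] /= h; rewrite -val_eqE /= => ne.
case: ifP => /= lt; first by rewrite h lt.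
by rewrite sym h /=; lia.
Qed.
Lemma E_arc n (adj : rel 'I_n) z : z \in Eset adj -> z \in arcs adj.
Proof. by rewrite inE arcP => /andP[]. Qed.
Lemma eps_id n (adj : rel 'I_n) z : z \in Eset adj -> eps z = z.
Proof. by rewrite inE /eps => /andP[_ ->]. Qed.
Lemma sw_sw n x : sw (sw x) = x :> 'I_n * 'I_n.
Proof. by case: x. Qed.
Lemma sw_neq n (adj : rel 'I_n) (irr : irreflexive adj) x : x \in arcs adj -> (x == sw x) = false.
Proof.
move=> /(arc_neq irr); case: x => x1 x2 /= ne; rewrite /sw xpair_eqE /=.
by apply/negbTE; move: ne; apply: contra => /andP[/eqP ->].
Qed.
Lemma arc_of_eq n (adj : rel 'I_n) (i j : 'I_#|arcs adj|) : (arc_of i == arc_of j) = (i == j).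
Proof. exact: (inj_eq enum_val_inj). Qed.

Lemma NN1 (R : comNzRingType) n (adj : rel 'I_n) (sym : symmetric adj) (irr : irreflexive adj) : Nm R adj *m (Nm R adj)^T = 1%:M + Jm R adj.
Proof.
apply/matrixP => i i'; rewrite !mxE.
under eq_bigr do rewrite !mxE.
rewrite (@sum_E _ _ adj (fun z : 'I_n * 'I_n => (eps (arc_of i) == z)%:R * (eps (arc_of i') == z)%:R)).
under eq_bigr do rewrite eq_sym.
rewrite sum_eq1 ?(eps_E sym irr) ?arc_ofP // eps_eq ?(arc_neq irr) ?arc_ofP // arc_of_eq.
have [->|ne] := eqVneq i' i; first by rewrite (sw_neq irr) ?arc_ofP // addr0.
rewrite add0r /=.
by rewrite eq_sym (can2_eq (@sw_sw n) (@sw_sw n)).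
Qed.


Lemma eps_eqE n (adj : rel 'I_n) (irr : irreflexive adj) x z :
  x \in arcs adj -> z \in Eset adj -> (eps x == z) = (x == z) || (x == sw z).
Proof.
move=> xa zE; rewrite -{1}(eps_id zE) (eps_eq (arc_neq irr xa) (arc_neq irr (E_arc zE))).
by rewrite [z == _]eq_sym (can2_eq (@sw_sw n) (@sw_sw n)).
Qed.

Lemma orb_natr (R : pzRingType) (b1 b2 : bool) : ~~ (b1 && b2) ->
  (b1 || b2)%:R = b1%:R + b2%:R :> R.
Proof. by case: b1; case: b2; rewrite /= ?addr0 ?add0r. Qed.

Lemma sum_eq1' (R : pzRingType) (T : finType) (A : {set T}) (z : T) :
  z \in A -> \sum_(x in A) (x == z)%:R = 1 :> R.
Proof.
by move=> zA; rewrite (bigD1 z) //= eqxx big1 ?addr0 // => x /andP[_ /negbTE ->].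
Qed.

Lemma NN2 (R : comNzRingType) n (adj : rel 'I_n) (sym : symmetric adj) (irr : irreflexive adj) :
  (Nm R adj)^T *m Nm R adj = 2%:M.
Proof.
apply/matrixP => j j'; rewrite !mxE.
under eq_bigr do rewrite !mxE.
rewrite (@sum_arcs _ _ adj (fun x => (eps x == ed j)%:R * (eps x == ed j')%:R)).
have zE : ed j \in Eset adj by apply: enum_valP.
have [<-|ne] := eqVneq j j'.
  have zne : (ed j == sw (ed j)) = false by rewrite (sw_neq irr) ?E_arc.
  under eq_bigr => x xa do rewrite -natrM mulnb andbb.
  rewrite (eq_bigr (fun x => (x == ed j)%:R + (x == sw (ed j))%:R)); last first.
    move=> x xa; rewrite (eps_eqE irr xa zE) orb_natr //.
    by apply/negP => /andP[/eqP -> ]; rewrite zne.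
  rewrite big_split /= !sum_eq1' ?eqxx ?(sw_arc sym) ?E_arc //.
rewrite big1 //= => x xa.
have [e1|] := eqVneq (eps x) (ed j); last by rewrite mul0r.
have [e2|] := eqVneq (eps x) (ed j'); last by rewrite mulr0.
by move: ne; rewrite -(inj_eq enum_val_inj) -/(ed j) -/(ed j') -e1 -e2 eqxx.
Qed.

Lemma sum_eq1T (R : pzRingType) (T : finType) (z : T) (F : T -> R) :
  \sum_x (x == z)%:R * F x = F z.
Proof.
by rewrite (bigD1 z) //= eqxx mul1r big1 ?addr0 // => x /negbTE ->; rewrite mul0r.
Qed.

Lemma JJ (R : comNzRingType) n (adj : rel 'I_n) (sym : symmetric adj) :
  Jm R adj *m Jm R adj = 1%:M.
Proof.
apply/matrixP => i i'; rewrite !mxE.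
under eq_bigr do rewrite !mxE.
rewrite (@sum_arcs _ _ adj (fun x => (x == sw (arc_of i))%:R * (arc_of i' == sw x)%:R)).
by rewrite sum_eq1 ?(sw_arc sym) ?arc_ofP // sw_sw arc_of_eq eq_sym.
Qed.

Lemma JL (R : comNzRingType) n (adj : rel 'I_n) (sym : symmetric adj) :
  Jm R adj *m Lm R adj = Km R adj.
Proof.
apply/matrixP => i v; rewrite !mxE.
under eq_bigr do rewrite !mxE.
rewrite (@sum_arcs _ _ adj (fun x => (x == sw (arc_of i))%:R * (x.1 == v)%:R)).
by rewrite sum_eq1 ?(sw_arc sym) ?arc_ofP.
Qed.

Lemma sum_arcs_pair (R : pzRingType) n (adj : rel 'I_n) (F : 'I_n * 'I_n -> R) :
  \sum_(x in arcs adj) F x = \sum_w \sum_v (adj w v)%:R * F (w, v).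
Proof.
rewrite pair_big big_mkcond /=; apply: eq_bigr => [[w v]] _.
by rewrite arcP /=; case: adj; rewrite ?mul1r ?mul0r.
Qed.

Lemma degR (R : pzRingType) n (adj : rel 'I_n) u :
  (deg adj u)%:R = \sum_w (adj u w)%:R :> R.
Proof.
rewrite /deg -sum1_card natr_sum big_mkcond /=; apply: eq_bigr => w _.
by rewrite inE; case: adj.
Qed.

Lemma KK (R : comNzRingType) n (adj : rel 'I_n) (sym : symmetric adj) d :
  regular adj d -> (Km R adj)^T *m Km R adj = (d%:R)%:M.
Proof.
move=> reg; apply/matrixP => u v; rewrite !mxE.
under eq_bigr do rewrite !mxE.
rewrite (@sum_arcs _ _ adj (fun x => (x.2 == u)%:R * (x.2 == v)%:R)) sum_arcs_pair /=.
have [<-|ne] := eqVneq u v.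
  rewrite /= -(reg u) degR; apply: eq_bigr => w _.
  under eq_bigr do rewrite -natrM mulnb andbb mulrC.
  by rewrite sum_eq1T sym.
rewrite mulr0n big1 // => w _; rewrite big1 // => v' _.
have [e|] := eqVneq v' u; last by rewrite mul0r mulr0.
by rewrite e (negbTE ne) !mulr0.
Qed.

Lemma KL (R : realType) n (adj : rel 'I_n) (sym : symmetric adj) :
  (Km R adj)^T *m Lm R adj = adjmx R adj.
Proof.
apply/matrixP => u v; rewrite !mxE.
under eq_bigr do rewrite !mxE.
rewrite (@sum_arcs _ _ adj (fun x => (x.2 == u)%:R * (x.1 == v)%:R)) sum_arcs_pair /=.
rewrite (bigD1 (F := fun w => \sum_v0 (adj w v0)%:R * ((v0 == u)%:R * (w == v)%:R)) v) //=.
rewrite [X in _ + X]big1 ?addr0; last first.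
  move=> w /negbTE ne; rewrite big1 // => v' _; by rewrite ne !mulr0.
under eq_bigr do rewrite eqxx mulr1 mulrC.
by rewrite sum_eq1T sym; case: (adj u v).
Qed.

Lemma card_arcs (R : realType) n (adj : rel 'I_n) (sym : symmetric adj) (irr : irreflexive adj) :
  #|arcs adj| = (#|Eset adj| + #|Eset adj|)%N.
Proof.
have := congr1 mxtrace (NN1 R sym irr).
rewrite mxtrace_mulC (NN2 R sym irr) mxtraceD !mxtrace_scalar.
have -> : \tr (Jm R adj) = 0.
  rewrite /mxtrace big1 // => i _; rewrite mxE.
  by rewrite (sw_neq irr (arc_ofP i)).
have -> : (2 *+ #|Eset adj| : R) = (#|Eset adj| + #|Eset adj|)%:R.
  by rewrite -mulr_natr natrD; ring.
by rewrite addr0 => /eqP; rewrite eqr_nat => /eqP ->.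
Qed.

Lemma groverE (R : realType) n (adj : rel 'I_n) q (a b : R) :
  regular adj q.+1 ->
  grover adj a b = ((2 / (q.+1)%:R - 1) * a + b) *: (Lm R adj *m (Km R adj)^T) - b *: Jm R adj.
Proof.
move=> reg; apply/matrixP => i j; rewrite !mxE /=.
under eq_bigr do rewrite !mxE.
under eq_bigr do rewrite eq_sym.
rewrite sum_eq1T reg /sw.
case: ifP => [/eqP ->|_] /=; first by rewrite eqxx /= mulr1; ring.
by case: ifP => _; rewrite /= ?mulr1 ?mulr0 ?subr0.
Qed.

Lemma poly_id (R : realType) n (adj : rel 'I_n) q (a b : R) :
  symmetric adj -> irreflexive adj -> regular adj q.+1 ->
  let beta := (2 / (q.+1)%:R - 1) * a + b in
  let s : {poly R} := 'X ^+ 2 - b%:P ^+ 2 in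
  s ^+ n * \det ('X%:M - map_mx polyC (grover adj a b)) =
  s ^+ #|Eset adj| * \det ((s + beta%:P * b%:P * (q.+1)%:R%:P)%:M
                            - ('X * beta%:P) *: map_mx polyC (adjmx R adj)).
Proof.
move=> sym irr reg beta s.
have := @core _ _ _ n (card_arcs R sym irr)
  (map_mx polyC (Nm R adj)) (map_mx polyC (Jm R adj))
  (map_mx polyC (Lm R adj)) (map_mx polyC (Km R adj))
  (map_mx polyC (adjmx R adj)) 'X b%:P beta%:P (q.+1)%:R%:P.
rewrite !map_trmx -!map_mxM (NN1 R sym irr) (NN2 R sym irr) (JJ R sym) (JL R sym)
  (KK R sym reg) (KL R sym) map_mxD !map_mx1 !map_scalar_mx polyXsubC_eq0.
rewrite -[b%:P]opprK -polyCN polyXsubC_eq0 polyCN opprK.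
have h2 : (polyC (2 : R))%:M = 2%:M :> 'M[{poly R}]_#|Eset adj| by rewrite rmorph_nat.
move=> /(_ erefl h2 erefl erefl erefl erefl isT isT) <-.
by rewrite (groverE _ _ reg) map_mxB !map_mxZ map_mxM.
Qed.

Theorem corollary3 (R : realType) (n q : nat) (adj : rel 'I_n)
  (a b lam : R) :
  simple_graph adj -> connected_graph adj -> regular adj q.+1 ->
  0 <= a <= 1 ->
  ((n <= nedges adj)%N \/ lam ^+ 2 != b ^+ 2) ->
  let m := nedges adj in
  let Ut := grover adj a b in
  let c1 := (1 - q%:R) * a + b * q%:R in
  let c2 := (1 - q%:R) * a + b * (q%:R + 1) in
  \det (lam%:M - Ut) =
    (lam ^+ 2 - b ^+ 2) ^ (m%:Z - n%:Z) *
      \det ((lam ^+ 2 + b * c1)%:M - lam * c2 *: transP R adj)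
  /\
  (lam ^+ 2 - b ^+ 2) ^ (m%:Z - n%:Z) *
      \det ((lam ^+ 2 + b * c1)%:M - lam * c2 *: transP R adj) =
    (lam ^+ 2 - b ^+ 2) ^ (m%:Z - n%:Z) *
      \det ((lam ^+ 2 - lam * c2 + b * c1)%:M
            + lam * (b - (q%:R - 1) / (q%:R + 1) * a) *: laplacian R adj).
Proof.
move=> [sym irr] _ reg _ hor m Ut c1 c2.
have qnz : (q%:R + 1 : R) != 0 by rewrite natr1 pnatr_eq0.
split; last first.
  congr (_ * \det _); apply/matrixP => u v; rewrite !mxE.
  have [->|ne] := eqVneq u v; rewrite ?irr /= ?reg.
    by rewrite -?natr1 /c2 ?mulr1n; field.
  by case: (adj u v); rewrite -?natr1 /c2 ?mulr0n; field.
have P := poly_id a b sym irr reg; move: P => /=.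
set s : {poly R} := 'X ^+ 2 - _.
set D1 := \det _; set D2 := \det _.
have E1 : D1.[lam] = \det (lam%:M - Ut).
  rewrite -horner_evalE -det_map_mx; congr (\det _); apply/matrixP => i j.
  by rewrite !mxE /= horner_evalE !hornerE hornerMn hornerX.
have E2 : D2.[lam] = \det ((lam ^+ 2 + b * c1)%:M - lam * c2 *: transP R adj).
  rewrite -horner_evalE -det_map_mx; congr (\det _); apply/matrixP => i j.
  rewrite !mxE /= horner_evalE !hornerE ?hornerMn ?hornerX reg /s !hornerE -!natr1.
  by case: (i == j); case: (adj i j); rewrite /c1 /c2 ?mulr1n ?mulr0n; field.
have Es : s.[lam] = lam ^+ 2 - b ^+ 2 by rewrite /s !hornerE.
have snz : s != 0.
  have -> : s = ('X - b%:P) * ('X - (- b)%:P) by rewrite /s polyCN; ring.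
  by rewrite mulf_neq0 ?polyXsubC_eq0.
rewrite -E1 -E2 -Es.
have [le|lt] := leqP n m.
  rewrite subzn // -exprnP.
  move=> P; have : s ^+ n * D1 = s ^+ n * (s ^+ (m - n) * D2).
    by rewrite P mulrA -exprD subnKC.
  move=> /(mulfI (expf_neq0 _ snz)) ->.
  by rewrite -!horner_evalE rmorphM rmorphXn.
have hne : lam ^+ 2 - b ^+ 2 != 0.
  by rewrite subr_eq0; case: hor => // h; rewrite leqNgt lt in h.
move=> P; have := congr1 (horner_eval lam) P.
rewrite !rmorphM !rmorphXn /= !horner_evalE Es.
set x := lam ^+ 2 - b ^+ 2 in hne *.
move=> Q; have : x ^+ m * (x ^+ (n - m) * D1.[lam]) = x ^+ m * D2.[lam].
  by rewrite mulrA -exprD subnKC ?(ltnW lt).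
move=> /(mulfI (expf_neq0 _ hne)) <-.
rewrite -opprB subzn ?(ltnW lt) // -exprnN mulrA mulVf ?mul1r //.
by rewrite expf_neq0.
Qed.
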